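(* Let $(X,\|\cdot\|)$ be a Banach space and let $\{v_n\}_{n\in\mathbb{N}}\subset X$ be a sequence such that $\|v_{n+m}\|\le\|v_n+v_m\|$ for all $n,m\in\mathbb{N}$. Assume that either (i) there exists $i\in\mathbb{N}$ with $v_i=0$, or (ii) $v_n\neq0$ for all $n\in\mathbb{N}$ and the set $\left\{\frac{v_n}{\|v_n\|}\right\}_{n\in\mathbb{N}}$ is a uniformly convex subset of $X$. Then the limit $\lim_{n\to\infty}\frac{v_n}{n}$ exists in $X$.
   Context: $\mathbb{N}=\{1,2,3,\dots\}$. A subset $S$ of a normed space $X$ is called uniformly convex if for every $\varepsilon>0$ there exists $\delta\in(0,1)$ such that for all $u,v\in S$ with $\|u\|=\|v\|=1$ and $\|u-v\|\ge\varepsilon$ we have $\|u+v\|\le 2-\delta$. *)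

(* Defs.v *)
From HB Require Import structures.
From mathcomp Require Import all_boot all_order all_algebra.
From mathcomp Require Import all_classical all_reals all_analysis.
Set Implicit Arguments. Unset Strict Implicit. Unset Printing Implicit Defensive.
Import Order.TTheory GRing.Theory Num.Theory.
Import numFieldNormedType.Exports.
Local Open Scope classical_set_scope.
Local Open Scope ring_scope.

Definition uniformly_convex_set (R : realType) (X : normedModType R)
  (S : set X) : Prop :=
  forall eps : R, 0 < eps ->
    exists delta : R, 0 < delta /\ delta < 1 /\
      forall u v : X, S u -> S v -> `|u| = 1 -> `|v| = 1 ->
        eps <= `|u - v| -> `|u + v| <= 2 - delta.

(* Main.v *)
Require Import Defs.
From HB Require Import structures.
From mathcomp Require Import all_boot all_order all_algebra.
From mathcomp Require Import all_classical all_reals all_analysis.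
From mathcomp Require Import lra ring.
Set Implicit Arguments. Unset Strict Implicit. Unset Printing Implicit Defensive.
Import Order.TTheory GRing.Theory Num.Theory.
Import numFieldNormedType.Exports.
Local Open Scope classical_set_scope.
Local Open Scope ring_scope.
Lemma fekete (R : realType) (a : nat -> R) :
 (forall n, 0 <= a n) ->
 (forall n m, (0<n)%N -> (0<m)%N -> a (n+m)%N <= a n + a m) ->
 let L := inf [set a n / n%:R | n in [set n : nat | (0 < n)%N]] in
 (0 <= L) /\ (forall n, (0<n)%N -> L * n%:R <= a n) /\
 (forall eta, 0 < eta -> exists N, (0<N)%N /\ forall n, (N <= n)%N -> a n <= (L + eta) * n%:R).
Proof.
move=> a0 sub L.
set E := [set a n / n%:R | n in [set n : nat | (0 < n)%N]].
have En : E !=set0 by exists (a 1%N / 1%:R); exists 1%N.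
have lb0 : lbound E 0 by move=> _ [n n0 <-]; rewrite divr_ge0.
have hl : has_lbound E by exists 0.
have L0 : 0 <= L by apply: lb_le_inf.
have Lle : forall n, (0<n)%N -> L * n%:R <= a n.
  move=> n n0; have := ge_inf hl (ex_intro2 _ _ n n0 erefl).
  by rewrite -/L ler_pdivlMr ?ltr0n.
split=> //; split=> // eta eta0.
have [_ [p p0 <-] ltp] := inf_adherent (divr_gt0 eta0 (ltr0n R 2)) (conj En hl).
rewrite -/L in ltp.
have iter : forall q r, (0 < r)%N -> a (q * p + r)%N <= q%:R * a p + a r.
  elim=> [|q IH] r r0; first by rewrite mul0n add0n mul0r add0r.
  rewrite mulSn -addnA (le_trans (sub _ _ p0 _)) ?addn_gt0 ?r0 ?orbT //.
  rewrite -natr1 mulrDl mul1r; have := IH r r0; lra.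
set A := \sum_(i < p.+1) a i.
have leA : forall r, (r <= p)%N -> a r <= A.
  move=> r rp; rewrite /A (bigD1 (Ordinal (rp : (r < p.+1)%N))) //=.
  by rewrite lerDl sumr_ge0.
have A0 : 0 <= A by apply: sumr_ge0.
have x0 : 0 <= A * 2 / eta by rewrite divr_ge0 ?mulr_ge0 // ltW.
exists (Num.bound (A * 2 / eta)).+1.
split; first by []. move=> n Nn.
have n0 : (0 < n)%N by apply: leq_trans Nn.
have hn : n = ((n.-1 %/ p) * p + (n.-1 %% p).+1)%N.
  by rewrite addnS -divn_eq prednK.
set q := (n.-1 %/ p)%N.
have hqp : (q * p <= n)%N by rewrite [X in (_ <= X)%N]hn leq_addr.
have ap : a p <= (L + eta / 2) * p%:R.
  by rewrite -ler_pdivrMr ?ltr0n // ltW.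
have step1 : a n <= q%:R * a p + A.
  rewrite {1}hn (le_trans (iter _ _ _)) // lerD2l leA //.
  by rewrite ltn_pmod.
have step2 : q%:R * a p <= (L + eta / 2) * n%:R.
  apply: (le_trans (ler_wpM2l (ler0n _ _) ap)).
  rewrite mulrCA; apply: ler_wpM2l; first by rewrite addr_ge0 // divr_ge0 // ltW.
  by rewrite -natrM ler_nat.
have step3 : A <= eta / 2 * n%:R.
  have := archi_boundP x0 => hb.
  have : A * 2 / eta < n%:R.
    apply: (lt_le_trans hb); rewrite ler_nat; exact: ltnW.
  rewrite ltr_pdivrMr // => h.
  nra.
have : a n <= (L + eta / 2) * n%:R + eta / 2 * n%:R.
  apply: (le_trans step1); exact: lerD.
by rewrite -mulrDl -addrA -splitr.
Qed.
Lemma conv_bound (R : realType) (X : normedModType R) (u w : X) (a b g d : R) :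
  `|u + w| <= 2 - d -> `|u| = 1 -> `|w| = 1 ->
  0 <= g -> g <= a -> g <= b ->
  `|a *: u + b *: w| <= a + b - d * g.
Proof.
move=> huw nu nw g0 ga gb.
have -> : a *: u + b *: w = g *: (u + w) + ((a - g) *: u + (b - g) *: w).
  by rewrite scalerDr !scalerBl addrACA [g *: u + _]addrC [g *: w + _]addrC !subrK.
apply: (le_trans (ler_normD _ _)).
apply: (@le_trans _ _ (g * (2 - d) + ((a - g) + (b - g)))); last by lra.
apply: lerD.
  by rewrite normrZ ger0_norm // ler_wpM2l.
apply: (le_trans (ler_normD _ _)); apply: lerD;
  by rewrite normrZ ger0_norm ?subr_ge0 // ?nu ?nw mulr1.
Qed.

Lemma cvg_of_cauchy (R : realType) (X : completeNormedModType R) (w : nat -> X) :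
  (forall e : R, 0 < e -> exists N, forall n m, (N <= n)%N -> (N <= m)%N -> `|w n - w m| < e) ->
  cvg (w @ \oo).
Proof.
move=> H; apply: cauchy_cvg; apply: cauchy_exP => e e0.
have [N HN] := H e e0; exists (w N).
exists N => // n /= Nn. rewrite -ball_normE /=. exact: HN.
Qed.

Theorem mainTheorem7 (R : realType) (X : completeNormedModType R)
  (v : nat -> X) :
  (forall n m : nat, (0 < n)%N -> (0 < m)%N -> `|v (n + m)%N| <= `|v n + v m|) ->
  ((exists i : nat, (0 < i)%N /\ v i = 0) \/
   ((forall n : nat, (0 < n)%N -> v n != 0) /\
    uniformly_convex_set [set `|v n|^-1 *: v n | n in [set n : nat | (0 < n)%N]])) ->
  cvg ((fun n : nat => (n%:R)^-1 *: v n) @ \oo).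
Proof.
move=> hsub hcase.
pose a n := `|v n|.
have a0 : forall n, 0 <= a n by move=> n; exact: normr_ge0.
have asub : forall n m, (0<n)%N -> (0<m)%N -> a (n+m)%N <= a n + a m.
  by move=> n m n0 m0; apply: (le_trans (hsub n m n0 m0)); exact: ler_normD.
move: (fekete a0 asub) => /=.
set L := inf _ => -[L0 [Lle Fek]].
apply: cvg_of_cauchy.
case: (eqVneq L 0) => [L0e | Lne0].
  move=> e e0.
  have [N [N0 HN]] := Fek (e / 3) (divr_gt0 e0 (ltr0n R 3)).
  have hw : forall n, (N <= n)%N -> `|n%:R^-1 *: v n| <= e / 3.
    move=> n Nn; have n0 : (0 < n)%N by apply: leq_trans Nn.
    rewrite normrZ ger0_norm ?invr_ge0 // mulrC ler_pdivrMr ?ltr0n //.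
    by have := HN n Nn; rewrite L0e add0r.
  exists N => n m Nn Nm.
  apply: (le_lt_trans (ler_normB _ _)).
  have := hw n Nn; have := hw m Nm; lra.
have Lpos : 0 < L by rewrite lt_def Lne0 L0.
case: hcase => [[i [i0 vi]] | [vnz uc]].
  have := Lle i i0; rewrite /a vi normr0 => h.
  have : 0 < L * i%:R by rewrite mulr_gt0 // ltr0n.
  by rewrite ltNge h.
pose u n := `|v n|^-1 *: v n.
have Su : forall n, (0 < n)%N -> [set `|v n|^-1 *: v n | n in [set n : nat | (0 < n)%N]] (u n).
  by move=> n n0; exists n.
have nu : forall n, (0 < n)%N -> `|u n| = 1.
  move=> n n0; rewrite /u normrZ normfV normr_id mulVf //.
  by rewrite normr_eq0 vnz.
have vu : forall n, (0 < n)%N -> v n = a n *: u n.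
  move=> n n0; rewrite /u scalerA mulfV ?scale1r //.
  by rewrite normr_eq0 vnz.
have ucauchy : forall eps, 0 < eps -> exists N, (0 < N)%N /\
    forall n n', (N <= n)%N -> (N <= n')%N -> `|u n - u n'| <= 2 * eps.
  move=> eps eps0; have [d [d0 [d1 hd]]] := uc eps eps0.
  have c0 : 0 < d * L / 2 by rewrite divr_gt0 // mulr_gt0.
  have [N [N0 HN]] := Fek (d * L / 2) c0.
  exists N; split => // n n' Nn Nn'.
  rewrite leNgt; apply/negP => hbig.
  pose e j := a j - L * j%:R.
  have e0 : forall j, (0 < j)%N -> 0 <= e j.
    by move=> j j0; rewrite /e subr_ge0 Lle.
  have step : forall k m, (N <= k)%N -> (k <= m)%N -> eps <= `|u k - u m| ->
      e (m + k)%N <= e m - d * L / 2.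
    move=> k m Nk km hkm.
    have k0 : (0 < k)%N by apply: leq_trans Nk.
    have m0 : (0 < m)%N by apply: leq_trans km.
    have h1 := hsub m k m0 k0.
    rewrite (vu m m0) (vu k k0) addrC in h1.
    have hc := hd _ _ (Su k k0) (Su m m0) (nu k k0) (nu m m0) hkm.
    have hLk : L * k%:R <= a m.
      apply: le_trans (Lle m m0); apply: ler_wpM2l; first exact: L0.
      by rewrite ler_nat.
    have h2 := conv_bound hc (nu k k0) (nu m m0) (mulr_ge0 L0 (ler0n _ k))
      (Lle k k0) hLk.
    have h3 := le_trans h1 h2.
    have h4 := HN k Nk.
    have k1 : 1 <= k%:R :> R by rewrite ler1n.
    have h5 : d * L / 2 <= d * L / 2 * k%:R.
      by rewrite ler_pMr.
    rewrite /e natrD /a.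
    rewrite /a in h3 h4.
    nra.
  have iter : forall j : nat, exists m, (n + n' <= m)%N /\
      e m <= e (n + n')%N - j%:R * (d * L / 2).
    elim=> [|j [m [hm hem]]].
      by exists (n + n')%N; split => //; rewrite mul0r subr0.
    have nm : (n <= m)%N by apply: leq_trans hm; exact: leq_addr.
    have n'm : (n' <= m)%N by apply: leq_trans hm; exact: leq_addl.
    have : eps <= `|u n - u m| \/ eps <= `|u n' - u m|.
      case: (lerP eps `|u n - u m|) => h; first by left.
      case: (lerP eps `|u n' - u m|) => h'; first by right.
      exfalso; move: hbig; apply/negP; rewrite -leNgt.
      have t1 := ler_distD (u m) (u n) (u n').
      have t2 : `|u m - u n'| = `|u n' - u m| by rewrite distrC.
      lra.
    case=> h.
      exists (m + n)%N; split; first by apply: leq_trans hm (leq_addr _ _).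
      have := step n m Nn nm h; rewrite -[j.+1]addn1 natrD; lra.
    exists (m + n')%N; split; first by apply: leq_trans hm (leq_addr _ _).
    have := step n' m Nn' n'm h; rewrite -[j.+1]addn1 natrD; lra.
  have nn0 : (0 < n + n')%N by rewrite addn_gt0 (leq_trans N0 Nn).
  have x0 : 0 <= e (n + n')%N / (d * L / 2) by rewrite divr_ge0 ?e0 // ltW.
  have [m [hm hem]] := iter (Num.bound (e (n + n')%N / (d * L / 2))).
  have := archi_boundP x0; rewrite ltr_pdivrMr // => hb.
  have := e0 m (leq_trans nn0 hm); lra.
move=> e e0.
have q0 : 0 < e / 4 by rewrite divr_gt0.
have [N1 [N10 HN1]] := Fek (e / 4) q0.
have Lq : 0 < L + e / 4 by rewrite addr_gt0.
have ep0 : 0 < e / (4 * (L + e / 4)) by rewrite divr_gt0 // mulr_gt0.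
have [N2 [N20 HN2]] := ucauchy _ ep0.
pose r n := n%:R^-1 * a n.
have rb : forall n, (N1 <= n)%N -> L <= r n /\ r n <= L + e / 4.
  move=> n Nn; have n0 : (0 < n)%N by apply: leq_trans Nn.
  rewrite /r mulrC ler_pdivlMr ?ler_pdivrMr ?ltr0n //.
  by split; [apply: Lle | apply: HN1].
have wr : forall n, (0 < n)%N -> n%:R^-1 *: v n = r n *: u n.
  by move=> n n0; rewrite (vu n n0) scalerA.
exists (maxn N1 N2) => n m; rewrite !geq_max => /andP[n1 n2] /andP[m1 m2].
have n0 : (0 < n)%N by apply: leq_trans n1.
have m0 : (0 < m)%N by apply: leq_trans m1.
rewrite (wr n n0) (wr m m0).
have -> : r n *: u n - r m *: u m = (r n - r m) *: u n + r m *: (u n - u m).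
  by rewrite scalerBl scalerBr addrA subrK.
have [rn1 rn2] := rb n n1; have [rm1 rm2] := rb m m1.
have hd : `|r n - r m| <= e / 4.
  by rewrite ler_norml; apply/andP; split; lra.
have hu := HN2 n m n2 m2.
have rm0 : 0 <= r m by apply: le_trans rm1; exact: L0.
have h4 : (L + e / 4) * (2 * (e / (4 * (L + e / 4)))) = e / 2.
  have l4 : L * 4 + e != 0 by rewrite gt_eqF //; lra.
  by field; exact: l4.
have b1 : `|(r n - r m) *: u n| <= e / 4.
  rewrite normrZ; apply: (le_trans _ hd); rewrite -[X in _ <= X]mulr1.
  apply: ler_wpM2l => //; rewrite le_eqVlt; apply/orP; left; apply/eqP; exact: nu n n0.
have b2 : `|r m *: (u n - u m)| <= e / 2.
  rewrite normrZ ger0_norm //; rewrite -h4.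
  apply: ler_pM => //; exact: hu.
apply: (le_lt_trans (ler_normD _ _)).
apply: (@le_lt_trans _ _ (e / 4 + e / 2)); first exact: lerD b1 b2.
lra.
Qed.
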